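(* Let $R_{e,q}=\mathbb{F}_q[u]/\langle u^e-1\rangle$, where $q=p^m$ with $p$ an odd prime and $q=et+1$ for integers $e\geq 2,t\geq 1$. Then every cyclic code of length $n$ over $R_{e,q}$ is principally generated; that is, $R_{e,q}[x]/\langle x^n-1\rangle$ is a principal ideal ring.
   Context: Cyclic codes of length $n$ over $R_{e,q}$ (submodules of $R_{e,q}^n$ closed under cyclic shift) are identified with ideals of $R_{e,q}[x]/\langle x^n-1\rangle$. *)

(* Defs.v *)
From HB Require Import structures.
From mathcomp Require Import all_boot all_algebra.
Set Implicit Arguments. Unset Strict Implicit. Unset Printing Implicit Defensive.
Import GRing.Theory.
Local Open Scope ring_scope.

(* R_{e,q} = F_q[u]/<u^e - 1>, realized with MathComp's qpoly construction
   (polynomials reduced modulo the monic polynomial u^e - 1). *)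
Definition Req (F : finFieldType) (e : nat) : comNzRingType :=
  {poly %/ ('X^e - 1 : {poly F})}.

Definition cyc_ring (F : finFieldType) (e n : nat) : comNzRingType :=
  {poly %/ ('X^n - 1 : {poly Req F e})}.

Definition is_ideal (T : comNzRingType) (I : T -> Prop) : Prop :=
  [/\ I 0,
      (forall x y, I x -> I y -> I (x - y)) &
      (forall a x, I x -> I (a * x))].

Definition is_principal (T : comNzRingType) (I : T -> Prop) : Prop :=
  exists g : T, forall x, I x <-> exists a : T, x = a * g.

Definition principal_ideal_ring (T : comNzRingType) : Prop :=
  forall I : T -> Prop, is_ideal I -> is_principal I.

(* Main.v *)
Require Import Defs.
From HB Require Import structures.
From mathcomp Require Import all_boot all_algebra.
From Stdlib Require Import Classical ClassicalEpsilon.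
Set Implicit Arguments. Unset Strict Implicit. Unset Printing Implicit Defensive.
Import GRing.Theory.
Local Open Scope ring_scope.
Lemma poly_pid (K : fieldType) (J : {poly K} -> Prop) : J 0 ->
  (forall x y, J x -> J y -> J (x - y)) -> (forall a x, J x -> J (a * x)) ->
  exists g, forall x, J x <-> exists a, x = a * g.
Proof.
move=> J0 JB JM.
case: (classic (exists p, J p /\ p != 0)) => [[p [Jp p0]]|Hn]; last first.
  exists 0 => x; split=> [Jx|[a ->]]; last by rewrite mulr0.
  exists 0; rewrite mulr0; case: (eqVneq x 0) => // x0; exfalso; apply: Hn; by exists x.
suff H : forall k (p : {poly K}), (size p <= k)%N -> J p -> p != 0 ->
   exists g, forall x, J x <-> exists a, x = a * g by exact: (H _ p (leqnn _)).
clear Jp p0.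
elim=> [|k IH] {}p sp Jp p0.
  by move: p0; rewrite -size_poly_gt0; case: (size p) sp.
case: (classic (exists p', [/\ J p', p' != 0 & (size p' <= k)%N])) =>
   [[p' [Jp' p'0 sp']]|Hn]; first exact: (IH p').
exists p => x; split=> [Jx|[a ->]]; last exact: JM.
exists (x %/ p).
have Jr : J (x %% p).
  have -> : x %% p = x - (x %/ p) * p by rewrite {2}(divp_eq x p) addrC addKr.
  by apply: JB => //; apply: JM.
have sr : (size (x %% p)%R < size p)%N by rewrite ltn_modp.
case: (eqVneq (x %% p) 0) => [r0|r0]; first by rewrite {1}(divp_eq x p) r0 addr0.
exfalso; apply: Hn; exists (x %% p); split => //.
by rewrite -ltnS (leq_trans sr).
Qed.

Section Decomp.
Variables (T : comNzRingType) (I : finType) (eps : I -> T).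
Hypothesis eps_orth : forall i j, eps i * eps j = if i == j then eps i else 0.

Lemma eps_sum j (u : I -> T) : eps j * (\sum_i eps i * u i) = eps j * u j.
Proof.
rewrite mulr_sumr (bigD1 j) //= big1 ?addr0; first by rewrite mulrA eps_orth eqxx.
by move=> i /negbTE ij; rewrite mulrA eps_orth eq_sym ij mul0r.
Qed.

Lemma eps_prod (u v : I -> T) :
  (\sum_i eps i * u i) * (\sum_i eps i * v i) = \sum_i eps i * (u i * v i).
Proof.
rewrite mulr_suml; apply: eq_bigr => i _.
by rewrite mulrAC eps_sum mulrAC -mulrA.
Qed.
End Decomp.

Lemma pir_decomp (T : comNzRingType) (K : fieldType) (I : finType)
  (iota : {poly K} -> T) (eps : I -> T) :
  (forall x y, iota (x - y) = iota x - iota y) ->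
  (forall x y, iota (x * y) = iota x * iota y) ->
  (forall i j, eps i * eps j = if i == j then eps i else 0) ->
  (forall t, exists f : I -> {poly K}, t = \sum_i eps i * iota (f i)) ->
  principal_ideal_ring T.
Proof.
move=> iB iM orth surj Qi; rewrite /is_ideal; case=> Qi0 QiB QiM.
have QiD : forall x y, Qi x -> Qi y -> Qi (x + y).
  by move=> x y Ix Iy; rewrite -[y]opprK -[- y]sub0r; apply: (QiB) => //; apply: (QiB).
have Isum : forall (f : I -> T), (forall i, Qi (f i)) -> Qi (\sum_i f i).
  by move=> f Hf; apply: (big_ind Qi) => //.
pose J i := fun f => Qi (eps i * iota f).
have Jid : forall i, exists g, forall x, J i x <-> exists a, x = a * g.
  move=> i; apply: poly_pid.
  - by rewrite /J -[0 : {poly K}](subrr 0) iB subrr mulr0.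
  - by move=> x y; rewrite /J iB mulrBr; apply: (QiB).
  - by move=> a x; rewrite /J iM mulrCA; apply: (QiM).
pose g i := proj1_sig (constructive_indefinite_description _ (Jid i)).
have gP i : forall x, J i x <-> exists a, x = a * g i.
  exact: (proj2_sig (constructive_indefinite_description _ (Jid i))).
exists (\sum_i eps i * iota (g i)) => x; split.
  move=> Ix; have [f xE] := surj x.
  have Jf i : J i (f i).
    by rewrite /J -(eps_sum orth i (fun j => iota (f j))) -xE; apply: (QiM).
  have a i : {a | f i = a * g i}.
    apply: constructive_indefinite_description; exact/gP.
  exists (\sum_i eps i * iota (proj1_sig (a i))).
  rewrite (eps_prod orth) xE; apply: eq_bigr => i _.
  by rewrite -iM -(proj2_sig (a i)).
case=> a ->; apply: (QiM); apply: Isum => i.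
apply: (proj2 (gP i (g i))); exists 1; by rewrite mul1r.
Qed.
Section Conc.
Variables (F : finFieldType) (e n : nat) (z : F).
Hypotheses (he : (0 < e)%N) (hn : (0 < n)%N) (prim : e.-primitive_root z).

Local Notation h1 := ('X^e - 1 : {poly F}).
Local Notation R := (Req F e).
Local Notation h2 := ('X^n - 1 : {poly R}).
Local Notation T := (cyc_ring F e n).

Lemma mk1 : mk_monic h1 = h1.
Proof.
rewrite /mk_monic -polyC1 size_XnsubC // monicXnsubC // andbT ltnS he //.
Qed.

Lemma mk2 : mk_monic h2 = h2.
Proof.
rewrite /mk_monic -polyC1 size_XnsubC // monicXnsubC // andbT ltnS hn //.
Qed.

Definition ev (k : nat) (c : R) : F := (val c).[z ^+ k].

Lemma root_h1 k : h1.[z ^+ k] = 0.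
Proof.
by rewrite hornerD hornerN hornerXn hornerC -exprM mulnC exprM (prim_expr_order prim) expr1n subrr.
Qed.

Lemma ev_in k p : ev k (in_qpoly h1 p) = p.[z ^+ k].
Proof.
rewrite /ev /= mk1.
rewrite [in RHS](Pdiv.RingMonic.rdivp_eq (monicXnsubC 1 he) p).
by rewrite hornerD hornerM -polyC1 root_h1 mulr0 add0r.
Qed.

Lemma evD k : {morph ev k : a b / a + b}.
Proof. by move=> a b; rewrite /ev /= hornerD. Qed.

Lemma evN k a : ev k (- a) = - ev k a.
Proof. by rewrite /ev /= hornerN. Qed.

Lemma evB k a b : ev k (a - b) = ev k a - ev k b.
Proof. by rewrite evD evN. Qed.

Lemma evM k a b : ev k (a * b) = ev k a * ev k b.
Proof.
have -> : a * b = in_qpoly h1 (val a * val b) by [].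
by rewrite ev_in hornerM.
Qed.

Lemma evC k a : ev k (qpolyC h1 a) = a.
Proof. by rewrite /ev /= hornerC. Qed.

Lemma ev_sum k (I : finType) (f : I -> R) : ev k (\sum_i f i) = \sum_i ev k (f i).
Proof.
have E : val (\sum_i f i) = \sum_i val (f i) by exact: poly_of_qpoly_sum.
by rewrite /ev E horner_sum.
Qed.

Lemma ev_inj (c : R) : (forall k : 'I_e, ev k c = 0) -> c = 0.
Proof.
move=> H; apply: val_inj => /=.
apply: (@roots_geq_poly_eq0 _ _ [seq z ^+ (nat_of_ord k) | k <- enum 'I_e]).
- by apply/allP => x /mapP [k _ ->]; rewrite /root -/(ev k c) H.
- rewrite map_inj_uniq ?enum_uniq // => i j /eqP.
  by rewrite (eq_prim_root_expr prim) !modn_small // => /eqP /val_inj.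
- rewrite size_map size_enum_ord.
  have H1 : size (mk_monic h1) = e.+1 by rewrite mk1 -polyC1 size_XnsubC.
  by move: (size_mk_monic c); rewrite [X in (_ < X)%N]H1.
Qed.

Lemma ev_eq (a b : R) : (forall k : 'I_e, ev k a = ev k b) -> a = b.
Proof. by move=> H; apply/eqP; rewrite -subr_eq0; apply/eqP/ev_inj => k; rewrite evB H subrr. Qed.

Definition cst (i : 'I_e) : F := \prod_(j < e | j != i) (z ^+ i - z ^+ j).
Definition epsR (i : 'I_e) : R :=
  qpolyC h1 (cst i)^-1 * in_qpoly h1 (\prod_(j < e | j != i) ('X - (z ^+ j)%:P)).

Lemma ev_epsR (k i : 'I_e) : ev k (epsR i) = (k == i)%:R.
Proof.
rewrite evM evC ev_in horner_prod.
under eq_bigr do rewrite hornerXsubC.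
case: (eqVneq k i) => [->|ki].
  rewrite mulVf //; rewrite prodf_seq_neq0; apply/allP => j _; apply/implyP => ji.
  rewrite subr_eq0 (eq_prim_root_expr prim) !modn_small //.
  by apply: contra ji => /eqP /val_inj ->.
by rewrite (bigD1 k) //= subrr mul0r mulr0.
Qed.

Lemma ev0 k : ev k 0 = 0.
Proof. by rewrite /ev /= horner0. Qed.

Lemma ev1 k : ev k 1 = 1.
Proof. by rewrite /ev /= hornerC. Qed.

Lemma epsR_orth i j : epsR i * epsR j = if i == j then epsR i else 0.
Proof.
apply: ev_eq => k; case: (eqVneq i j) => [->|ij]; rewrite evM !ev_epsR.
  by rewrite -natrM mulnb andbb.
rewrite ev0; case: (eqVneq k i) => [ki|]; last by rewrite mul0r.
by rewrite ki (negbTE ij) mulr0.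
Qed.

Lemma epsR_sum : \sum_i epsR i = 1.
Proof.
apply: ev_eq => k; rewrite ev_sum ev1 (bigD1 k) //= big1 ?addr0 ?ev_epsR ?eqxx //.
by move=> i /negbTE ik; rewrite ev_epsR eq_sym ik.
Qed.

Lemma epsR_decomp c : c = \sum_i epsR i * qpolyC h1 (ev i c).
Proof.
apply: ev_eq => k; rewrite ev_sum (bigD1 k) //= big1 ?addr0.
  by rewrite evM evC ev_epsR eqxx mul1r.
by move=> i /negbTE ik; rewrite evM ev_epsR eq_sym ik mul0r.
Qed.

Definition kap (c : R) : T := qpolyC h2 c.
Definition eps (i : 'I_e) : T := kap (epsR i).
Definition iota (p : {poly F}) : T := in_qpoly h2 (map_poly (qpolyC h1) p).

Lemma iotaB x y : iota (x - y) = iota x - iota y.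
Proof. by rewrite /iota !raddfB. Qed.

Lemma iotaD x y : iota (x + y) = iota x + iota y.
Proof. by rewrite /iota !raddfD. Qed.

Lemma iota0 : iota 0 = 0.
Proof. by rewrite /iota !raddf0. Qed.

Lemma iotaM x y : iota (x * y) = iota x * iota y.
Proof. by rewrite /iota !rmorphM. Qed.

Lemma eps_orth i j : eps i * eps j = if i == j then eps i else 0.
Proof. by rewrite /eps /kap -rmorphM epsR_orth; case: eqP => //; rewrite rmorph0. Qed.

Lemma in_qpolyC2 (b : R) : in_qpoly h2 b%:P = qpolyC h2 b.
Proof.
apply: val_inj => /=; apply: in_qpoly_small.
by rewrite mk2 -polyC1 size_XnsubC // size_polyC; case: (b != 0).
Qed.

Lemma iotaC a : iota a%:P = kap (qpolyC h1 a).
Proof. by rewrite /iota map_polyC in_qpolyC2. Qed.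

Definition Sd (t : T) := exists f : 'I_e -> {poly F}, t = \sum_i eps i * iota (f i).

Lemma Sd0 : Sd 0.
Proof.
exists (fun _ => 0); rewrite big1 // => i _.
by rewrite iota0 mulr0.
Qed.

Lemma SdD x y : Sd x -> Sd y -> Sd (x + y).
Proof.
move=> [f ->] [g ->]; exists (fun i => f i + g i); rewrite -big_split /=.
apply: eq_bigr => i _; rewrite -mulrDr; congr (_ * _).
by rewrite iotaD.
Qed.

Lemma SdM x y : Sd x -> Sd y -> Sd (x * y).
Proof.
move=> [f ->] [g ->]; exists (fun i => f i * g i).
rewrite (eps_prod eps_orth); apply: eq_bigr => i _; by rewrite iotaM.
Qed.

Lemma SdC c : Sd (kap c).
Proof.
exists (fun i => (ev i c)%:P); rewrite [in LHS](epsR_decomp c) /kap rmorph_sum.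
by apply: eq_bigr => i _; rewrite iotaC rmorphM.
Qed.

Lemma eps_total : \sum_i eps i = 1.
Proof. by rewrite /eps /kap -rmorph_sum epsR_sum rmorph1. Qed.

Lemma SdX : Sd (in_qpoly h2 'X).
Proof.
exists (fun _ => 'X); rewrite -mulr_suml eps_total mul1r /iota map_polyX //.
Qed.

Lemma SdXn k : Sd (in_qpoly h2 'X ^+ k).
Proof.
elim: k => [|k IH]; first by rewrite expr0 -(rmorph1 (qpolyC h2)); exact: SdC.
by rewrite exprS; apply: SdM => //; exact: SdX.
Qed.

Lemma Sd_all t : Sd t.
Proof.
have -> : t = in_qpoly h2 (val t).
  by apply: val_inj; symmetry; exact: (in_qpoly_small (size_mk_monic t)).
rewrite -[val t]coefK poly_def raddf_sum /=.
apply: (big_ind Sd); [exact: Sd0 | exact: SdD | move=> i _].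
rewrite -mul_polyC rmorphM /= in_qpolyC2 rmorphXn /=.
apply: SdM; [exact: SdC | exact: SdXn].
Qed.

Lemma pir_T : principal_ideal_ring T.
Proof. exact: (pir_decomp iotaB iotaM eps_orth Sd_all). Qed.

End Conc.

From mathcomp Require Import cyclic finfield.

Lemma exists_prim (F : finFieldType) (e t : nat) :
  #|F| = (e * t + 1)%N -> (0 < e)%N -> (0 < t)%N -> exists z : F, e.-primitive_root z.
Proof.
move=> hF he ht.
set rs := [seq x <- enum F | x != 0].
have q1 : (0 < #|F|.-1)%N.
  by rewrite hF addn1 /= muln_gt0 he ht.
have : has (#|F|.-1).-primitive_root rs.
  apply: has_prim_root => //.
  - apply/allP => x; rewrite mem_filter => /andP [x0 _].
    rewrite unity_rootE; apply/eqP; apply: (mulfI x0).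
    by rewrite -exprS prednK ?expf_card ?mulr1 // hF addn1.
  - by rewrite filter_uniq ?enum_uniq.
  - rewrite -(cardC1 (0 : F)%R) cardE.
    apply: eq_leq; congr size; rewrite /rs enumT /enum_mem; apply: eq_filter => x.
    by rewrite !inE.
case/hasP => w _ pw.
exists (w ^+ t).
have -> : t = ((#|F|.-1) %/ e)%N by rewrite hF addn1 /= mulKn.
apply: dvdn_prim_root => //; by rewrite hF addn1 /= dvdn_mulr.
Qed.

Local Close Scope ring_scope.

Theorem corollary3p6 (F : finFieldType) (p m e t n : nat) :
  prime p -> odd p -> #|F| = p ^ m -> #|F| = e * t + 1 ->
  2 <= e -> 1 <= t -> 0 < n ->
  principal_ideal_ring (cyc_ring F e n).
Proof.
move=> _ _ _ hF he ht hn.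
have he0 : (0 < e)%N by apply: leq_trans he.
have [z pz] := exists_prim hF he0 ht.
exact: (pir_T he0 hn pz).
Qed.
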